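(* Let $X$ be a separated locally convex space and $g\colon X\to\mathbb R^{\vartriangle}$ closed and convex (possibly improper). Then $g^{**}=g$, where $$g^{**}(x)=\sup_{(\xi,r)\in X^{\vartriangle}\times\mathbb R}\big(\xi_r(x)-^{\vartriangle}g^*(\xi,r)\big),\quad x\in X.$$
   Context: $\overline{\mathbb R}=\mathbb R\cup\{\pm\infty\}$ with usual order; inf-addition $r+^{\vartriangle}s=\inf\{a+b: a,b\in\mathbb R, r\leq a, s\leq b\}$; inf-difference $r-^{\vartriangle}s=\min\{t: r\leq s+^{\vartriangle}t\}$. $\mathbb R^{\vartriangle}$ is $\overline{\mathbb R}$ with $+^{\vartriangle}$; $g$ convex means $g(tx_1+(1-t)x_2)\leq tg(x_1)+^{\vartriangle}(1-t)g(x_2)$ for $t\in(0,1)$; closed means $\operatorname{epi}g=\{(x,r)\in X\times\mathbb R: g(x)\leq r\}$ is closed. For $x^*\in X^*$, $r\in\mathbb R$: $x^*_r(x)=x^*(x)-r$; $\hat x^*_r(x)=-\infty$ if $x^*(x)-r\leq0$, $+\infty$ otherwise; $\hat x^*=\hat x^*_0$; $X^{\vartriangle}=X^*\cup\{\hat x^*: x^*\in X^*\}$; $\xi_r=x^*_r$ if $\xi=x^*$, $\xi_r=\hat x^*_r$ if $\xi=\hat x^*$. Conjugate: $g^*(\xi,r)=\sup_{x\in X}(\xi_r(x)-^{\vartriangle}g(x))$ for $(\xi,r)\in X^{\vartriangle}\times\mathbb R$. *)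

(* Defs.v *)
From Stdlib Require Import Reals Lra Classical ClassicalEpsilon.
Open Scope R_scope.

Inductive Rbar : Type := Fin (r : R) | PInf | MInf.

Definition Rbar_le (u v : Rbar) : Prop :=
  match u, v with
  | MInf, _ => True
  | _, PInf => True
  | Fin a, Fin b => a <= b
  | _, _ => False
  end.

(* inf-addition  r +^▵ s = inf { a + b : a,b ∈ R, r <= a, s <= b }
   (written out by cases; see Rbar_iadd_is_glb below for the proof that
   this is exactly that infimum). *)
Definition Rbar_iadd (u v : Rbar) : Rbar :=
  match u, v with
  | PInf, _ => PInf
  | _, PInf => PInf
  | MInf, _ => MInf
  | _, MInf => MInf
  | Fin a, Fin b => Fin (a + b)
  end.

(* inf-difference  r -^▵ s = min { t : r <= s +^▵ t }
   (written out by cases; see Rbar_idiff_is_min below). *)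
Definition Rbar_idiff (u v : Rbar) : Rbar :=
  match v, u with
  | PInf, _ => MInf
  | MInf, MInf => MInf
  | MInf, _ => PInf
  | Fin _, MInf => MInf
  | Fin _, PInf => PInf
  | Fin b, Fin a => Fin (a - b)
  end.

Definition Rbar_pmult (t : R) (u : Rbar) : Rbar :=
  match u with
  | Fin a => Fin (t * a)
  | PInf => PInf
  | MInf => MInf
  end.

Definition Rbar_is_lub (S : Rbar -> Prop) (m : Rbar) : Prop :=
  (forall v, S v -> Rbar_le v m) /\
  (forall u, (forall v, S v -> Rbar_le v u) -> Rbar_le m u).

Definition Rbar_is_glb (S : Rbar -> Prop) (m : Rbar) : Prop :=
  (forall v, S v -> Rbar_le m v) /\
  (forall u, (forall v, S v -> Rbar_le u v) -> Rbar_le u m).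

(* supremum of a set of extended reals (it always exists, in the complete
   lattice R-bar; sup of the empty set is -∞). *)
Definition Rbar_sup (S : Rbar -> Prop) : Rbar :=
  epsilon (inhabits MInf) (fun m => Rbar_is_lub S m).

Lemma Rbar_iadd_is_glb (r s : Rbar) :
  Rbar_is_glb (fun v => exists a b : R,
                  v = Fin (a + b) /\ Rbar_le r (Fin a) /\ Rbar_le s (Fin b))
              (Rbar_iadd r s).
Proof.
  split.
  - intros v [a [b [-> [Ha Hb]]]].
    destruct r, s; simpl in *; try tauto; lra.
  - intros u Hu.
    destruct r as [a| |], s as [b| |]; simpl; try exact I;
      try (destruct u; simpl; trivial; fail).
    + specialize (Hu (Fin (a + b)) (ex_intro _ a (ex_intro _ b
        (conj eq_refl (conj (Rle_refl a) (Rle_refl b)))))).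
      exact Hu.
    +
      destruct u as [c| |]; simpl; trivial.
      * specialize (Hu (Fin (a + (c - a - 1))) (ex_intro _ a (ex_intro _ (c - a - 1)
          (conj eq_refl (conj (Rle_refl a) I))))). simpl in Hu. lra.
      * specialize (Hu (Fin (a + 0)) (ex_intro _ a (ex_intro _ 0
          (conj eq_refl (conj (Rle_refl a) I))))). exact Hu.
    + destruct u as [c| |]; simpl; trivial.
      * specialize (Hu (Fin ((c - b - 1) + b)) (ex_intro _ (c - b - 1) (ex_intro _ b
          (conj eq_refl (conj I (Rle_refl b)))))). simpl in Hu. lra.
      * specialize (Hu (Fin (0 + b)) (ex_intro _ 0 (ex_intro _ b
          (conj eq_refl (conj I (Rle_refl b)))))). exact Hu.
    + destruct u as [c| |]; simpl; trivial.
      * specialize (Hu (Fin ((c - 1) + 0)) (ex_intro _ (c - 1) (ex_intro _ 0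
          (conj eq_refl (conj I I))))). simpl in Hu. lra.
      * specialize (Hu (Fin (0 + 0)) (ex_intro _ 0 (ex_intro _ 0
          (conj eq_refl (conj I I))))). exact Hu.
Qed.

Lemma Rbar_idiff_is_min (r s : Rbar) :
  Rbar_le r (Rbar_iadd s (Rbar_idiff r s)) /\
  (forall t, Rbar_le r (Rbar_iadd s t) -> Rbar_le (Rbar_idiff r s) t).
Proof.
  split.
  - destruct r as [a| |], s as [b| |]; simpl; trivial; lra.
  - intros t Ht.
    destruct r as [a| |], s as [b| |], t as [c| |]; simpl in *; trivial; lra.
Qed.

Record LCS : Type := {
  car :> Type;
  zero : car;
  add : car -> car -> car;
  opp : car -> car;
  scal : R -> car -> car;
  add_assoc : forall x y z, add x (add y z) = add (add x y) z;
  add_comm : forall x y, add x y = add y x;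
  add_zero : forall x, add zero x = x;
  add_opp : forall x, add x (opp x) = zero;
  scal_one : forall x, scal 1 x = x;
  scal_assoc : forall a b x, scal a (scal b x) = scal (a * b) x;
  scal_distr_r : forall a x y, scal a (add x y) = add (scal a x) (scal a y);
  scal_distr_l : forall a b x, scal (a + b) x = add (scal a x) (scal b x);
  is_open : (car -> Prop) -> Prop;
  open_full : is_open (fun _ => True);
  open_inter : forall U V, is_open U -> is_open V ->
                 is_open (fun x => U x /\ V x);
  open_union : forall F : (car -> Prop) -> Prop,
                 (forall U, F U -> is_open U) ->
                 is_open (fun x => exists U, F U /\ U x);
  add_cont : forall U x y, is_open U -> U (add x y) ->
               exists V W, is_open V /\ is_open W /\ V x /\ W y /\
                 (forall x' y', V x' -> W y' -> U (add x' y'));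
  scal_cont : forall U a x, is_open U -> U (scal a x) ->
               exists d V, 0 < d /\ is_open V /\ V x /\
                 (forall a' x', Rabs (a' - a) < d -> V x' -> U (scal a' x'));
  locally_convex : forall U x, is_open U -> U x ->
               exists V, is_open V /\ V x /\ (forall y, V y -> U y) /\
                 (forall y z t, 0 <= t <= 1 -> V y -> V z ->
                    V (add (scal t y) (scal (1 - t) z)));
  separated : forall x y, x <> y ->
               exists U V, is_open U /\ is_open V /\ U x /\ V y /\
                 (forall z, U z -> V z -> False)
}.

Arguments zero {_}.
Arguments add {_} _ _.
Arguments opp {_} _.
Arguments scal {_} _ _.
Arguments is_open {_} _.

Record dual (X : LCS) : Type := {
  dfun :> X -> R;
  dfun_add : forall x y, dfun (add x y) = dfun x + dfun y;
  dfun_scal : forall a x, dfun (scal a x) = a * dfun x;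
  dfun_cont : forall x eps, 0 < eps ->
      exists U, is_open U /\ U x /\
        (forall y, U y -> Rabs (dfun y - dfun x) < eps)
}.

Inductive dualtri (X : LCS) : Type :=
  | Plain (f : dual X)
  | Hat (f : dual X).
Arguments Plain {X} f.
Arguments Hat {X} f.

Definition xi_r {X : LCS} (xi : dualtri X) (r : R) (x : X) : Rbar :=
  match xi with
  | Plain f => Fin (f x - r)
  | Hat f => if Rle_dec (f x - r) 0 then MInf else PInf
  end.

(* epi g = {(x,r) ∈ X × R : g x <= r} is closed in X × R (product topology) *)
Definition closed_fun {X : LCS} (g : X -> Rbar) : Prop :=
  forall (x : X) (r : R), ~ Rbar_le (g x) (Fin r) ->
    exists U d, is_open U /\ U x /\ 0 < d /\
      (forall y s, U y -> Rabs (s - r) < d -> ~ Rbar_le (g y) (Fin s)).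

Definition convex_fun {X : LCS} (g : X -> Rbar) : Prop :=
  forall (x1 x2 : X) (t : R), 0 < t < 1 ->
    Rbar_le (g (add (scal t x1) (scal (1 - t) x2)))
            (Rbar_iadd (Rbar_pmult t (g x1)) (Rbar_pmult (1 - t) (g x2))).

Definition conj_fun {X : LCS} (g : X -> Rbar) (xi : dualtri X) (r : R) : Rbar :=
  Rbar_sup (fun v => exists x : X, v = Rbar_idiff (xi_r xi r x) (g x)).

Definition biconj_fun {X : LCS} (g : X -> Rbar) (x : X) : Rbar :=
  Rbar_sup (fun v => exists (xi : dualtri X) (r : R),
                       v = Rbar_idiff (xi_r xi r x) (conj_fun g xi r)).

(* Main.v *)
Require Import Defs.
From Stdlib Require Import Reals Lra Classical ClassicalEpsilon FunctionalExtensionality PropExtensionality.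
Open Scope R_scope.

Lemma Rbar_le_trans (u v w : Rbar) : Rbar_le u v -> Rbar_le v w -> Rbar_le u w.
Proof. destruct u, v, w; simpl; intros; try tauto; lra. Qed.

Lemma Rbar_lub_ex (S : Rbar -> Prop) : exists m, Rbar_is_lub S m.
Proof.
  destruct (classic (S PInf)) as [HP|HP].
  { exists PInf; split; [intros v _; destruct v; simpl; trivial|].
    intros u Hu; apply Hu; exact HP. }
  destruct (classic (exists r, S (Fin r))) as [[r0 Hr0]|HF].
  - destruct (classic (bound (fun r => S (Fin r)))) as [Hb|Hb].
    + destruct (completeness _ Hb (ex_intro _ r0 Hr0)) as [l [Hl1 Hl2]].
      exists (Fin l); split.
      * intros [a| |] Hv; simpl; trivial. now apply Hl1. tauto.
      * intros [b| |] Hu; simpl; trivial.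
        -- apply Hl2. intros x Hx. exact (Hu (Fin x) Hx).
        -- exact (Hu (Fin r0) Hr0).
    + exists PInf; split; [intros v _; destruct v; simpl; trivial|].
      intros [b| |] Hu; simpl; trivial.
      * apply Hb. exists b. intros x Hx. exact (Hu (Fin x) Hx).
      * exact (Hu (Fin r0) Hr0).
  - exists MInf; split.
    + intros [a| |] Hv; simpl; trivial. apply HF; eauto. tauto.
    + intros u _; simpl; trivial.
Qed.

Lemma Rbar_sup_spec (S : Rbar -> Prop) : Rbar_is_lub S (Rbar_sup S).
Proof. unfold Rbar_sup. apply epsilon_spec. apply Rbar_lub_ex. Qed.

Lemma Rbar_sup_ub (S : Rbar -> Prop) v : S v -> Rbar_le v (Rbar_sup S).
Proof. intros H. apply (proj1 (Rbar_sup_spec S)); auto. Qed.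

Lemma Rbar_sup_least (S : Rbar -> Prop) u :
  (forall v, S v -> Rbar_le v u) -> Rbar_le (Rbar_sup S) u.
Proof. intros H. apply (proj2 (Rbar_sup_spec S)); auto. Qed.

Lemma Rbar_le_MInf u : Rbar_le u MInf -> u = MInf.
Proof. destruct u; simpl; tauto. Qed.

Lemma idiff_swap u v c : Rbar_le (Rbar_idiff u v) c -> Rbar_le (Rbar_idiff u c) v.
Proof. destruct u, v, c; simpl; intros; try tauto; lra. Qed.

Record VS : Type := {
  vT :> Type;
  v0 : vT;
  vadd : vT -> vT -> vT;
  vopp : vT -> vT;
  vscal : R -> vT -> vT;
  vadd_assoc : forall x y z, vadd x (vadd y z) = vadd (vadd x y) z;
  vadd_comm : forall x y, vadd x y = vadd y x;
  vadd_zero : forall x, vadd v0 x = x;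
  vadd_opp : forall x, vadd x (vopp x) = v0;
  vscal_one : forall x, vscal 1 x = x;
  vscal_assoc : forall a b x, vscal a (vscal b x) = vscal (a * b) x;
  vscal_distr_r : forall a x y, vscal a (vadd x y) = vadd (vscal a x) (vscal a y);
  vscal_distr_l : forall a b x, vscal (a + b) x = vadd (vscal a x) (vscal b x)
}.
Arguments v0 {_}.
Arguments vadd {_} _ _.
Arguments vopp {_} _.
Arguments vscal {_} _ _.

Definition VS_of (X : LCS) : VS :=
  Build_VS (car X) zero add opp scal (add_assoc X) (add_comm X) (add_zero X)
    (add_opp X) (scal_one X) (scal_assoc X) (scal_distr_r X) (scal_distr_l X).

Lemma vadd_0r (V : VS) (x : V) : vadd x v0 = x.
Proof. rewrite vadd_comm. apply vadd_zero. Qed.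

Lemma vadd_cancel (V : VS) (x y z : V) : vadd x y = vadd x z -> y = z.
Proof.
  intros H. rewrite <- (vadd_zero V y), <- (vadd_zero V z).
  rewrite <- (vadd_opp V x). rewrite (vadd_comm V x (vopp x)).
  rewrite <- !vadd_assoc. now rewrite H.
Qed.

Lemma vscal_0 (V : VS) (x : V) : vscal 0 x = v0.
Proof.
  apply (vadd_cancel V (vscal 0 x)). rewrite vadd_0r, <- vscal_distr_l.
  now rewrite Rplus_0_r.
Qed.

Lemma vscal_v0 (V : VS) a : vscal a (@v0 V) = v0.
Proof. rewrite <- (vscal_0 V v0), vscal_assoc. now rewrite Rmult_0_r. Qed.

Lemma vopp_scal (V : VS) (x : V) : vopp x = vscal (-1) x.
Proof.
  apply (vadd_cancel V x). rewrite vadd_opp.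
  rewrite <- (vscal_one V x) at 1. rewrite <- vscal_distr_l.
  replace (1 + -1) with 0 by ring. now rewrite vscal_0.
Qed.

Lemma vadd4 (V : VS) (a b c d : V) :
  vadd (vadd a b) (vadd c d) = vadd (vadd a c) (vadd b d).
Proof.
  rewrite !vadd_assoc. f_equal. rewrite <- !vadd_assoc. f_equal. apply vadd_comm.
Qed.

Definition comb {V : VS} (t : R) (a b : V) : V := vadd (vscal t a) (vscal (1 - t) b).

Lemma comb_add (V : VS) t (a b a' b' : V) :
  comb t (vadd a b) (vadd a' b') = vadd (comb t a a') (comb t b b').
Proof. unfold comb. rewrite !vscal_distr_r. apply vadd4. Qed.

Lemma comb_same (V : VS) t (a : V) : comb t a a = a.
Proof. unfold comb. rewrite <- vscal_distr_l. replace (t + (1 - t)) with 1 by ring. apply vscal_one. Qed.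

Lemma lin_norm (V : VS) (m1 m2 y : V) t1 t2 a :
  vadd (vadd m1 (vscal t1 y)) (vscal a (vadd m2 (vscal t2 y))) =
  vadd (vadd m1 (vscal a m2)) (vscal (t1 + a * t2) y).
Proof.
  rewrite vscal_distr_r, vscal_assoc, vadd4. f_equal. now rewrite vscal_distr_l.
Qed.

Lemma vadd_scal_cancel (V : VS) (x y : V) t : vadd (vadd x (vscal t y)) (vscal (- t) y) = x.
Proof.
  rewrite <- vadd_assoc, <- vscal_distr_l. replace (t + - t) with 0 by ring.
  rewrite vscal_0. apply vadd_0r.
Qed.

Definition VS_prod (V : VS) : VS.
Proof.
  refine (Build_VS (V * R) (v0, 0)
    (fun p q => (vadd (fst p) (fst q), snd p + snd q))
    (fun p => (vopp (fst p), - snd p))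
    (fun a p => (vscal a (fst p), a * snd p)) _ _ _ _ _ _ _ _).
  - intros [] [] []; simpl. f_equal; [apply vadd_assoc|ring].
  - intros [] []; simpl. f_equal; [apply vadd_comm|ring].
  - intros []; simpl. f_equal; [apply vadd_zero|ring].
  - intros []; simpl. f_equal; [apply vadd_opp|ring].
  - intros []; simpl. f_equal; [apply vscal_one|ring].
  - intros a b []; simpl. f_equal; [apply vscal_assoc|ring].
  - intros a [] []; simpl. f_equal; [apply vscal_distr_r|ring].
  - intros a b []; simpl. f_equal; [apply vscal_distr_l|ring].
Defined.

Definition subset {U : Type} (A B : U -> Prop) := forall u, A u -> B u.
Definition chainF {U : Type} (F : (U -> Prop) -> Prop) :=
  forall A B, F A -> F B -> subset A B \/ subset B A.
Definition bigU {U : Type} (F : (U -> Prop) -> Prop) : U -> Prop :=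
  fun u => exists A, F A /\ A u.

Lemma set_ext {U : Type} (A B : U -> Prop) : subset A B -> subset B A -> A = B.
Proof.
  intros H1 H2. apply functional_extensionality. intros u.
  apply propositional_extensionality. split; auto.
Qed.

Definition tower {U : Type} (h : (U -> Prop) -> (U -> Prop)) (b : U -> Prop) (A : U -> Prop) :=
  forall Q : (U -> Prop) -> Prop, Q b -> (forall X, Q X -> Q (h X)) ->
    (forall F, (forall X, F X -> Q X) -> chainF F -> (exists X, F X) -> Q (bigU F)) -> Q A.

Lemma tower_b {U : Type} h (b : U -> Prop) : tower h b b.
Proof. intros Q Hb _ _. exact Hb. Qed.

Lemma tower_h {U : Type} h (b : U -> Prop) X : tower h b X -> tower h b (h X).
Proof. intros HX Q Hb Hh Hu. apply Hh. apply HX; auto. Qed.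

Lemma tower_U {U : Type} h (b : U -> Prop) F :
  (forall X, F X -> tower h b X) -> chainF F -> (exists X, F X) -> tower h b (bigU F).
Proof. intros HF Hc Hne Q Hb Hh Hu. apply Hu; auto. intros X HX. apply HF; auto. Qed.

Lemma tower_ind {U : Type} h (b : U -> Prop) (R : (U -> Prop) -> Prop) :
  R b -> (forall X, tower h b X -> R X -> R (h X)) ->
  (forall F, (forall X, F X -> tower h b X /\ R X) -> chainF F -> (exists X, F X) -> R (bigU F)) ->
  forall A, tower h b A -> R A.
Proof.
  intros Hb Hh Hu A HA.
  assert (H : tower h b A /\ R A).
  { apply (HA (fun X => tower h b X /\ R X)).
    - split; [apply tower_b|auto].
    - intros X [HX1 HX2]. split; [apply tower_h; auto|auto].
    - intros F HF Hc Hne. split.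
      + apply tower_U; auto. intros X HX; apply HF; auto.
      + apply Hu; auto. }
  tauto.
Qed.

Lemma tower_b_sub {U : Type} h (b : U -> Prop) (hext : forall A, subset A (h A)) A :
  tower h b A -> subset b A.
Proof.
  apply tower_ind.
  - intros u H; exact H.
  - intros X _ H u Hu. apply hext, H, Hu.
  - intros F HF _ [X HX] u Hu. exists X. split; auto. apply (proj2 (HF X HX)), Hu.
Qed.

Definition extreme {U : Type} h (b : U -> Prop) C :=
  forall A, tower h b A -> subset A C -> A <> C -> subset (h A) C.

Lemma ext_split {U : Type} h (b : U -> Prop) (hext : forall A, subset A (h A)) C :
  tower h b C -> extreme h b C -> forall A, tower h b A -> subset A C \/ subset (h C) A.
Proof.
  intros HC Hext. apply tower_ind.
  - left. apply (tower_b_sub h); auto.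
  - intros X HX [H|H].
    + destruct (classic (X = C)) as [E|E].
      * subst. right. intros u Hu; exact Hu.
      * left. apply Hext; auto.
    + right. intros u Hu. apply hext, H, Hu.
  - intros F HF _ _.
    destruct (classic (forall X, F X -> subset X C)) as [Hall|Hn].
    + left. intros u [X [HX Hu]]. apply (Hall X HX), Hu.
    + right. apply not_all_ex_not in Hn. destruct Hn as [X Hn].
      apply imply_to_and in Hn. destruct Hn as [HX Hn].
      destruct (proj2 (HF X HX)) as [H|H]; [tauto|].
      intros u Hu. exists X. split; auto.
Qed.

Lemma all_extreme {U : Type} h (b : U -> Prop) (hext : forall A, subset A (h A)) C :
  tower h b C -> extreme h b C.
Proof.
  apply tower_ind.
  - intros A HA Hs Hne. exfalso. apply Hne. apply set_ext; auto.
    apply (tower_b_sub h); auto.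
  - intros X HX HeX A HA Hs Hne.
    destruct (ext_split h b hext X HX HeX A HA) as [H|H].
    + destruct (classic (A = X)) as [E|E].
      * subst. intros u Hu; exact Hu.
      * intros u Hu. apply hext. apply (HeX A HA H E), Hu.
    + exfalso. apply Hne. apply set_ext; auto.
  - intros F HF Hc Hne A HA Hs HAne.
    assert (Hex : exists u, bigU F u /\ ~ A u).
    { apply NNPP. intros Hn. apply HAne. apply set_ext; auto.
      intros u Hu. apply NNPP. intros Hna. apply Hn. exists u. auto. }
    destruct Hex as [u [[X [HX Hu]] HnA]].
    destruct (HF X HX) as [HXt HXe].
    destruct (ext_split h b hext X HXt HXe A HA) as [H|H].
    + assert (A <> X) by (intros E; subst; tauto).
      intros v Hv. exists X. split; auto. apply (HXe A HA H); auto.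
    + exfalso. apply HnA, H, hext, Hu.
Qed.

Lemma BW {U : Type} (P : (U -> Prop) -> Prop) (h : (U -> Prop) -> (U -> Prop)) (b : U -> Prop) :
  P b -> (forall A, P A -> P (h A)) -> (forall A, subset A (h A)) ->
  (forall F, (forall A, F A -> P A) -> chainF F -> (exists A, F A) -> P (bigU F)) ->
  exists A, P A /\ subset (h A) A.
Proof.
  intros Pb Ph hext Pu.
  assert (Hch : chainF (tower h b)).
  { intros A C HA HC. destruct (ext_split h b hext C HC (all_extreme h b hext C HC) A HA) as [H|H]; auto.
    right. intros u Hu. apply H, hext, Hu. }
  assert (HT : tower h b (bigU (tower h b))).
  { apply tower_U; auto. exists b. apply tower_b. }
  exists (bigU (tower h b)). split.
  - revert HT. apply tower_ind; auto.
    intros F HF Hc Hne. apply Pu; auto. intros A HA; apply HF; auto.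
  - intros u Hu. exists (h (bigU (tower h b))). split; auto. apply tower_h; auto.
Qed.

Lemma comb_scal (V : VS) t a b (y : V) :
  comb t (vscal a y) (vscal b y) = vscal (t * a + (1 - t) * b) y.
Proof. unfold comb. rewrite !vscal_assoc. now rewrite vscal_distr_l. Qed.

Lemma sep_reals (A B : R -> Prop) :
  (exists a, A a) -> (exists b, B b) -> (forall a b, A a -> B b -> a <= b) ->
  exists al, (forall a, A a -> a <= al) /\ (forall b, B b -> al <= b).
Proof.
  intros [a0 Ha0] [b0 Hb0] H.
  assert (Hbd : bound A) by (exists b0; intros x Hx; apply (H x b0); auto).
  destruct (completeness A Hbd (ex_intro _ a0 Ha0)) as [l [Hl1 Hl2]].
  exists l. split; [exact Hl1|]. intros b Hb. apply Hl2. intros x Hx. apply H; auto.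
Qed.

Lemma div_le_cross a b s t : 0 < s -> 0 < t -> a * t <= b * s -> a / s <= b / t.
Proof.
  intros Hs Ht H.
  replace (a / s) with ((a * t) * / (s * t)) by (field; lra).
  replace (b / t) with ((b * s) * / (s * t)) by (field; lra).
  apply Rmult_le_compat_r; auto. left. apply Rinv_0_lt_compat. nra.
Qed.

Definition Pgraph {E : VS} (K : E -> Prop) (z : E) (G : (E * R) -> Prop) : Prop :=
  (forall e v1 v2, G (e, v1) -> G (e, v2) -> v1 = v2) /\
  (forall e1 v1 e2 v2 a, G (e1, v1) -> G (e2, v2) -> G (vadd e1 (vscal a e2), v1 + a * v2)) /\
  (forall t, G (vscal t z, t)) /\
  (forall e v, G (e, v) -> K e -> v <= 1).

Lemma Pgraph_0 {E : VS} K (z : E) G : Pgraph K z G -> G (v0, 0).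
Proof. intros [_ [_ [H _]]]. specialize (H 0). now rewrite vscal_0 in H. Qed.

Lemma Pgraph_scal {E : VS} K (z : E) G e v a : Pgraph K z G -> G (e, v) -> G (vscal a e, a * v).
Proof.
  intros HP He. pose proof (Pgraph_0 K z G HP) as H0.
  destruct HP as [_ [Hc _]]. specialize (Hc _ _ _ _ a H0 He).
  rewrite vadd_zero, Rplus_0_l in Hc. exact Hc.
Qed.

Lemma HB_step {E : VS} (K : E -> Prop) (z : E)
  (Kconv : forall a b t, 0 <= t <= 1 -> K a -> K b -> K (comb t a b))
  (Kabs : forall e, exists t, 0 < t /\ K (vscal t e))
  G y : Pgraph K z G -> ~ (exists v, G (y, v)) ->
  exists G', subset G G' /\ Pgraph K z G' /\ exists v, G' (y, v).
Proof.
  intros HP Hy.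
  pose proof (Pgraph_0 K z G HP) as H0.
  destruct HP as [Hf [Hc [Hz Hb]]].
  assert (Hal : exists al,
    (forall a, (exists m w s, 0 < s /\ G (m, w) /\ K (vadd m (vscal (- s) y)) /\ a = (w - 1) / s) -> a <= al) /\
    (forall b, (exists m w t, 0 < t /\ G (m, w) /\ K (vadd m (vscal t y)) /\ b = (1 - w) / t) -> al <= b)).
  { apply sep_reals.
    - destruct (Kabs (vscal (-1) y)) as [t [Ht HK]].
      exists ((0 - 1) / t), v0, 0, t. repeat split; auto.
      rewrite vadd_zero. rewrite vscal_assoc in HK. now replace (t * -1) with (- t) in HK by ring.
    - destruct (Kabs y) as [t [Ht HK]].
      exists ((1 - 0) / t), v0, 0, t. repeat split; auto. now rewrite vadd_zero.
    - intros a b [m1 [w1 [s [Hs [G1 [K1 ->]]]]]] [m2 [w2 [t [Ht [G2 [K2 ->]]]]]].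
      set (l := t / (s + t)).
      assert (Hl : 0 <= l <= 1) by (unfold l; split; [apply Rlt_le, Rdiv_lt_0_compat; lra|
        apply Rmult_le_reg_r with (s + t); [lra|]; unfold Rdiv; rewrite Rmult_assoc, Rinv_l; lra]).
      pose proof (Kconv _ _ l Hl K1 K2) as HK.
      rewrite comb_add, comb_scal in HK.
      replace (l * - s + (1 - l) * t) with 0 in HK by (unfold l; field; lra).
      rewrite vscal_0, vadd_0r in HK.
      assert (HG : G (comb l m1 m2, l * w1 + (1 - l) * w2)).
      { unfold comb. apply Hc; auto. pose proof (Hc _ _ _ _ l H0 G1) as H.
        rewrite vadd_zero, Rplus_0_l in H. exact H. }
      pose proof (Hb _ _ HG HK) as Hle.
      assert (Heq : t * w1 + s * w2 = (s + t) * (l * w1 + (1 - l) * w2)) by (unfold l; field; lra).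
      assert (H2 : t * w1 + s * w2 <= s + t).
      { rewrite Heq. replace (s + t) with ((s + t) * 1) at 2 by ring.
        apply Rmult_le_compat_l; lra. }
      apply div_le_cross; auto. lra. }
  destruct Hal as [al [HA HB]].
  set (G' := fun p : E * R => exists m w t, G (m, w) /\ p = (vadd m (vscal t y), w + t * al)).
  exists G'. split; [|split].
  - intros [e v] He. exists e, v, 0. split; auto. rewrite vscal_0, vadd_0r. f_equal; ring.
  - split; [|split; [|split]].
    + intros e v1 v2 [m [w [t [Gm Em]]]] [m' [w' [t' [Gm' Em']]]].
      injection Em as Em1 Em2. injection Em' as Em1' Em2'. subst v1 v2.
      destruct (Req_dec t t') as [Et|Nt].
      * subst t'. rewrite Em1 in Em1'. rewrite !(vadd_comm E _ (vscal t y)) in Em1'.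
        apply vadd_cancel in Em1'. subst m'. rewrite (Hf _ _ _ Gm Gm'). ring.
      * exfalso. apply Hy.
        set (D := vadd m' (vscal (-1) m)).
        assert (HD : D = vscal (t - t') y).
        { apply (vadd_cancel E m). unfold D.
          rewrite (vadd_comm E m' (vscal (-1) m)), vadd_assoc.
          rewrite <- (vscal_one E m) at 1. rewrite <- vscal_distr_l.
          replace (1 + -1) with 0 by ring. rewrite vscal_0, vadd_zero.
          unfold Rminus. rewrite vscal_distr_l, vadd_assoc, <- Em1, Em1'.
          symmetry. apply vadd_scal_cancel. }
        pose proof (Hc _ _ _ _ (-1) Gm' Gm) as GD. fold D in GD.
        pose proof (Hc _ _ _ _ (/ (t - t')) H0 GD) as GY.
        rewrite vadd_zero, HD, vscal_assoc, Rinv_l, vscal_one in GY by lra.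
        eauto.
    + intros e1 v1 e2 v2 a [m1 [w1 [t1 [G1 E1]]]] [m2 [w2 [t2 [G2 E2]]]].
      injection E1 as -> ->. injection E2 as -> ->.
      exists (vadd m1 (vscal a m2)), (w1 + a * w2), (t1 + a * t2). split; auto.
      rewrite lin_norm. f_equal. ring.
    + intros t. exists (vscal t z), t, 0. split; auto. rewrite vscal_0, vadd_0r. f_equal; ring.
    + intros e v [m [w [t [Gm Em]]]] HK. injection Em as -> ->.
      destruct (Rtotal_order t 0) as [Hn|[H0'|Hpos]].
      * replace t with (- (- t)) in HK by ring.
        assert (Ha := HA _ (ex_intro _ m (ex_intro _ w (ex_intro _ (- t) (conj (ltac:(lra) : 0 < - t) (conj Gm (conj HK eq_refl))))))).
        assert (Hx : (w - 1) / - t * - t = w - 1) by (field; lra).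
        nra.
      * subst t. rewrite vscal_0, vadd_0r in HK. pose proof (Hb _ _ Gm HK). lra.
      * assert (Hb' := HB _ (ex_intro _ m (ex_intro _ w (ex_intro _ t (conj Hpos (conj Gm (conj HK eq_refl))))))).
        assert (Hx : (1 - w) / t * t = 1 - w) by (field; lra).
        nra.
  - exists (0 + 1 * al), v0, 0, 1. split; auto. rewrite vadd_zero, vscal_one. reflexivity.
Qed.

Definition hext_spec {E : VS} (K : E -> Prop) z (G G' : E * R -> Prop) : Prop :=
  subset G G' /\ (Pgraph K z G -> Pgraph K z G' /\
    ((forall y, exists v, G (y, v)) \/ exists y, ~ (exists v, G (y, v)) /\ exists v, G' (y, v))).

Lemma HB (E : VS) (K : E -> Prop) (z : E)
  (Kconv : forall a b t, 0 <= t <= 1 -> K a -> K b -> K (comb t a b))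
  (Kabs : forall e, exists t, 0 < t /\ K (vscal t e))
  (Hz : ~ K z) :
  exists phi : E -> R, (forall x y, phi (vadd x y) = phi x + phi y) /\
    (forall a x, phi (vscal a x) = a * phi x) /\ phi z = 1 /\ (forall e, K e -> phi e <= 1).
Proof.
  assert (K0 : K v0) by (destruct (Kabs v0) as [t [_ H]]; now rewrite vscal_v0 in H).
  assert (Kz : forall t, K (vscal t z) -> t <= 1).
  { intros t Ht. destruct (Rle_or_lt t 1) as [|Hlt]; auto. exfalso. apply Hz.
    assert (Hi : 0 <= / t <= 1).
    { split. left; apply Rinv_0_lt_compat; lra.
      rewrite <- Rinv_1. apply Rinv_le_contravar; lra. }
    pose proof (Kconv _ _ _ Hi Ht K0) as H. unfold comb in H.
    rewrite vscal_v0, vadd_0r, vscal_assoc, Rinv_l, vscal_one in H by lra. exact H. }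
  set (b := fun p : E * R => exists t, p = (vscal t z, t)).
  assert (Pb : Pgraph K z b).
  { split; [|split; [|split]].
    - intros e v1 v2 [t1 E1] [t2 E2]. injection E1 as E1 ->. injection E2 as E2 ->.
      apply NNPP. intros Hne. apply Hz.
      assert (H : vscal (t1 - t2) z = v0).
      { unfold Rminus. rewrite vscal_distr_l, <- E1, E2. rewrite <- vscal_distr_l.
        replace (t2 + - t2) with 0 by ring. apply vscal_0. }
      rewrite <- (vscal_one E z), <- (Rinv_l (t1 - t2)) by lra.
      now rewrite <- vscal_assoc, H, vscal_v0.
    - intros e1 v1 e2 v2 a [t1 E1] [t2 E2]. injection E1 as -> ->. injection E2 as -> ->.
      exists (t1 + a * t2). rewrite vscal_assoc, <- vscal_distr_l. reflexivity.
    - intros t. exists t. reflexivity.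
    - intros e v [t Et] HK. injection Et as -> ->. apply Kz; auto. }
  assert (Hspec : forall G, exists G', hext_spec K z G G').
  { intros G. destruct (classic (Pgraph K z G)) as [HP|HP].
    - destruct (classic (forall y, exists v, G (y, v))) as [Hf|Hf].
      + exists G. split; [intros u Hu; exact Hu|]. intros _. split; auto.
      + apply not_all_ex_not in Hf. destruct Hf as [y Hy].
        destruct (HB_step K z Kconv Kabs G y HP Hy) as [G' [H1 [H2 H3]]].
        exists G'. split; auto. intros _. split; auto. right. eauto.
    - exists G. split; [intros u Hu; exact Hu|]. tauto. }
  set (h := fun G => epsilon (inhabits G) (hext_spec K z G)).
  assert (Hh : forall G, hext_spec K z G (h G)).
  { intros G. unfold h. apply epsilon_spec. apply Hspec. }
  destruct (BW (Pgraph K z) h b Pb) as [A [PA HA]].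
  - intros A PA. apply (proj2 (Hh A) PA).
  - intros A. apply (proj1 (Hh A)).
  - intros F HF Hc [X0 HX0]. split; [|split; [|split]].
    + intros e v1 v2 [X1 [F1 H1]] [X2 [F2 H2]].
      destruct (Hc X1 X2 F1 F2) as [S|S].
      * apply (proj1 (HF X2 F2) e); auto.
      * apply (proj1 (HF X1 F1) e); auto.
    + intros e1 v1 e2 v2 a [X1 [F1 H1]] [X2 [F2 H2]].
      destruct (Hc X1 X2 F1 F2) as [S|S].
      * exists X2. split; auto. apply (proj1 (proj2 (HF X2 F2))); auto.
      * exists X1. split; auto. apply (proj1 (proj2 (HF X1 F1))); auto.
    + intros t. exists X0. split; auto. apply (proj1 (proj2 (proj2 (HF X0 HX0)))).
    + intros e v [X1 [F1 H1]]. apply (proj2 (proj2 (proj2 (HF X1 F1))) e v H1).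
  - assert (Hfull : forall y, exists v, A (y, v)).
    { destruct (proj2 (proj2 (Hh A) PA)) as [H|[y [Hy [v Hv]]]]; auto.
      exfalso. apply Hy. exists v. apply HA, Hv. }
    set (phi := fun e => epsilon (inhabits 0) (fun v => A (e, v))).
    assert (Hphi : forall e, A (e, phi e)).
    { intros e. unfold phi. apply epsilon_spec. apply Hfull. }
    destruct PA as [Af [Ac [Az Ab]]].
    exists phi. split; [|split; [|split]].
    + intros x y. apply (Af (vadd x y)); auto.
      pose proof (Ac _ _ _ _ 1 (Hphi x) (Hphi y)) as H. rewrite vscal_one, Rmult_1_l in H. exact H.
    + intros a x. apply (Af (vscal a x)); auto.
      pose proof (Ac _ _ _ _ a (Hphi v0) (Hphi x)) as H.
      rewrite vadd_zero in H.
      assert (H0 : phi v0 = 0).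
      { apply (Af v0); auto. pose proof (Az 0) as H0. now rewrite vscal_0 in H0. }
      rewrite H0, Rplus_0_l in H. exact H.
    + apply (Af z); auto. pose proof (Az 1) as H. now rewrite vscal_one in H.
    + intros e HK. apply (Ab e); auto.
Qed.

Lemma X_scal0 (X : LCS) (u : X) : scal 0 u = zero.
Proof. exact (vscal_0 (VS_of X) u). Qed.
Lemma X_add0r (X : LCS) (u : X) : add u zero = u.
Proof. exact (vadd_0r (VS_of X) u). Qed.
Lemma X_scalz (X : LCS) a : scal a (@zero X) = zero.
Proof. exact (vscal_v0 (VS_of X) a). Qed.
Lemma X_oppS (X : LCS) (u : X) : opp u = scal (-1) u.
Proof. exact (vopp_scal (VS_of X) u). Qed.

Lemma LineCont (X : LCS) (V : X -> Prop) p u : is_open V -> V p ->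
  exists dl, 0 < dl /\ forall t, Rabs t < dl -> V (add p (scal t u)).
Proof.
  intros HV Hp.
  assert (Hp' : V (add p (scal 0 u))) by (now rewrite X_scal0, X_add0r).
  destruct (add_cont X V p (scal 0 u) HV Hp') as [A [B [HA [HB [Ap [Bq HAB]]]]]].
  destruct (scal_cont X B 0 u HB Bq) as [dl [W [Hdl [HW [Wu HWB]]]]].
  exists dl. split; auto. intros t Ht. apply HAB; auto. apply HWB; auto.
  now rewrite Rminus_0_r.
Qed.

Lemma NB (X : LCS) (V : X -> Prop) p c (x y0 : X) : is_open V ->
  V (add p (scal c (add y0 (opp x)))) ->
  exists O, is_open O /\ O y0 /\ forall y, O y -> V (add p (scal c (add y (opp x)))).
Proof.
  intros HV H.
  destruct (add_cont X V _ _ HV H) as [A [B [HA [HB [Ap [Bq HAB]]]]]].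
  destruct (scal_cont X B c _ HB Bq) as [dl [W [Hdl [HW [Wu HWB]]]]].
  destruct (add_cont X W _ _ HW Wu) as [O [O2 [HO [HO2 [Oy [O2x HOO]]]]]].
  exists O. split; [|split]; auto. intros y Hy. apply HAB; auto. apply HWB; auto.
  rewrite Rminus_diag, Rabs_R0. exact Hdl.
Qed.

Lemma epi_conv (X : LCS) (g : X -> Rbar) (hconvex : convex_fun g) x x' s s' t :
  0 <= t <= 1 -> Rbar_le (g x) (Fin s) -> Rbar_le (g x') (Fin s') ->
  Rbar_le (g (add (scal t x) (scal (1 - t) x'))) (Fin (t * s + (1 - t) * s')).
Proof.
  intros Ht H1 H2.
  destruct (Req_dec t 0) as [E0|N0].
  { subst t. rewrite X_scal0, add_zero, Rminus_0_r, scal_one.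
    replace (0 * s + 1 * s') with s' by ring. exact H2. }
  destruct (Req_dec t 1) as [E1|N1].
  { subst t. rewrite Rminus_diag, X_scal0, X_add0r, scal_one.
    replace (1 * s + 0 * s') with s by ring. exact H1. }
  assert (Ht' : 0 < t < 1) by lra.
  eapply Rbar_le_trans; [apply (hconvex x x' t Ht')|].
  destruct (g x) as [a| |], (g x') as [b| |]; simpl in *; try tauto. nra.
Qed.

Lemma Rabs_lt_iff a d : Rabs a < d <-> - d < a < d.
Proof.
  split. intros H. destruct (Rabs_def2 _ _ H). lra.
  intros [H1 H2]. apply Rabs_def1; lra.
Qed.

Lemma conv_lt a b t d : 0 <= t <= 1 -> a < d -> b < d -> t * a + (1 - t) * b < d.
Proof.
  intros Ht Ha Hb. set (m := Rmin (d - a) (d - b)).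
  assert (Hm : 0 < m) by (apply Rmin_glb_lt; lra).
  assert (H1 : t * m <= t * (d - a)) by (apply Rmult_le_compat_l; [lra|apply Rmin_l]).
  assert (H2 : (1 - t) * m <= (1 - t) * (d - b)) by (apply Rmult_le_compat_l; [lra|apply Rmin_r]).
  nra.
Qed.

Lemma vid1 (E : VS) (c u z : E) t :
  vadd (vadd (vadd (vadd c (vopp u)) (vscal t z)) u) (vscal (- t) z) = c.
Proof.
  rewrite <- (vadd_assoc E (vadd c (vopp u)) (vscal t z) u).
  rewrite (vadd_comm E (vscal t z) u), vadd_assoc, vadd_scal_cancel.
  rewrite <- vadd_assoc, (vadd_comm E (vopp u) u), vadd_opp. apply vadd_0r.
Qed.

Lemma vid2 (E : VS) (q c : E) : vadd (vadd (vscal (-1) q) c) q = c.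
Proof.
  rewrite (vadd_comm E (vscal (-1) q) c), <- vadd_assoc, <- vopp_scal,
    (vadd_comm E (vopp q) q), vadd_opp. apply vadd_0r.
Qed.

Lemma vid3 (E : VS) (p u : E) : vadd (vadd p (vopp u)) u = p.
Proof. rewrite <- vadd_assoc, (vadd_comm E (vopp u) u), vadd_opp. apply vadd_0r. Qed.

Lemma vid4 (E : VS) (e u : E) t : vadd (vadd (vscal t e) u) (vscal (- t) e) = u.
Proof. rewrite (vadd_comm E (vscal t e) u). apply vadd_scal_cancel. Qed.

Lemma separation (X : LCS) (g : X -> Rbar) (hclosed : closed_fun g) (hconvex : convex_fun g)
  x0 rho x1 s1 : ~ Rbar_le (g x0) (Fin rho) -> Rbar_le (g x1) (Fin s1) ->
  exists (f : dual X) a c, (forall x s, Rbar_le (g x) (Fin s) -> f x + a * s <= c) /\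
    c < f x0 + a * rho.
Proof.
  intros Hx0 Hx1.
  destruct (hclosed x0 rho Hx0) as [U [d [HU [Ux0 [Hd Hsep]]]]].
  destruct (locally_convex X U x0 HU Ux0) as [V [HV [Vx0 [VU Vconv]]]].
  set (E := VS_prod (VS_of X)).
  set (C := fun e : E => Rbar_le (g (fst e)) (Fin (snd e))).
  set (c1 := (x1, s1) : E).
  set (N := fun n : E => V (add x0 (fst n)) /\ Rabs (snd n) < d).
  set (K := fun e : E => exists n, N n /\ C (vadd (vadd e c1) n)).
  set (z := vadd ((x0, rho) : E) (vopp c1)).
  assert (Nabs : forall e : E, exists t, 0 < t /\ N (vscal (- t) e)).
  { intros [u s]. destruct (LineCont X V x0 u HV Vx0) as [dl [Hdl Hl]].
    set (t := Rmin dl (d / (Rabs s + 1)) / 2).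
    assert (Hq : 0 < d / (Rabs s + 1)) by (apply Rdiv_lt_0_compat; [lra|pose proof (Rabs_pos s); lra]).
    assert (Ht0 : 0 < t) by (unfold t; pose proof (Rmin_glb_lt dl (d / (Rabs s + 1)) 0 Hdl Hq); lra).
    assert (Ht1 : t < dl) by (unfold t; pose proof (Rmin_l dl (d / (Rabs s + 1))); lra).
    assert (Ht2 : t < d / (Rabs s + 1)) by (unfold t; pose proof (Rmin_r dl (d / (Rabs s + 1))); lra).
    exists t. split; auto. split; simpl.
    - apply Hl. rewrite Rabs_Ropp, Rabs_pos_eq; lra.
    - rewrite Rabs_mult, Rabs_Ropp, (Rabs_pos_eq t) by lra.
      assert (Hs : t * (Rabs s + 1) < d).
      { apply Rmult_lt_reg_r with (/ (Rabs s + 1)).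
        apply Rinv_0_lt_compat; pose proof (Rabs_pos s); lra.
        rewrite Rmult_assoc, Rinv_r by (pose proof (Rabs_pos s); lra). lra. }
      pose proof (Rabs_pos s). nra. }
  assert (Kconv : forall a b t, 0 <= t <= 1 -> K a -> K b -> K (comb t a b)).
  { intros a b t Ht [na [Na Ca]] [nb [Nb Cb]].
    exists (comb t na nb). split.
    - destruct na as [wa sa], nb as [wb sb]. destruct Na as [Va Sa], Nb as [Vb Sb]. simpl in *.
      split.
      + pose proof (Vconv _ _ t Ht Va Vb) as H.
        pose proof (comb_add (VS_of X) t x0 wa x0 wb) as H2. unfold comb in H2. simpl in H2.
        pose proof (comb_same (VS_of X) t x0) as H3. unfold comb in H3. simpl in H3.
        rewrite H2, H3 in H. simpl. exact H.
      + apply Rabs_lt_iff. apply Rabs_lt_iff in Sa. apply Rabs_lt_iff in Sb. simpl. split.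
        * pose proof (conv_lt (- sa) (- sb) t d Ht ltac:(lra) ltac:(lra)). lra.
        * apply conv_lt; lra.
    - replace (vadd (vadd (comb t a b) c1) (comb t na nb)) with
        (comb t (vadd (vadd a c1) na) (vadd (vadd b c1) nb))
        by (rewrite !(comb_add E), (comb_same E); reflexivity).
      revert Ca Cb. generalize (vadd (vadd a c1) na) (vadd (vadd b c1) nb).
      intros [px ps] [qx qs] Ca Cb. unfold C in *. simpl in *.
      apply epi_conv; auto. }
  assert (Kabs : forall e, exists t, 0 < t /\ K (vscal t e)).
  { intros e. destruct (Nabs e) as [t [Ht Nt]]. exists t. split; auto.
    exists (vscal (- t) e). split; auto. rewrite vid4. exact Hx1. }
  assert (Kz : ~ K z).
  { intros [[w s] [[Vw Sw] Cw]]. unfold z in Cw. rewrite vid3 in Cw.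
    unfold C in Cw. simpl in Cw, Vw, Sw.
    apply (Hsep (add x0 w) (rho + s)); auto.
    replace (rho + s - rho) with s by ring. exact Sw. }
  destruct (HB E K z Kconv Kabs Kz) as [phi [Padd [Pscal [Pz PK]]]].
  set (f := fun x : X => phi ((x, 0) : E)).
  assert (fadd : forall x y, f (add x y) = f x + f y).
  { intros x y. unfold f. rewrite <- Padd. f_equal. simpl. f_equal. ring. }
  assert (fscal : forall a x, f (scal a x) = a * f x).
  { intros a x. unfold f. rewrite <- Pscal. f_equal. simpl. f_equal. ring. }
  assert (fopp : forall x, f (opp x) = - f x).
  { intros x. rewrite X_oppS, fscal. ring. }
  assert (fbnd : forall w, V (add x0 w) -> - f w <= 1).
  { intros w Hw. unfold f. replace (- phi ((w, 0) : E)) with (phi (vscal (-1) ((w, 0) : E))) by (rewrite Pscal; ring).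
    apply PK. exists ((w, 0) : E). split.
    - split; simpl; auto. rewrite Rabs_R0. exact Hd.
    - rewrite vid2. exact Hx1. }
  assert (fcont : forall x eps, 0 < eps ->
      exists U, is_open U /\ U x /\ (forall y, U y -> Rabs (f y - f x) < eps)).
  { intros x eps Heps. set (cc := 2 / eps).
    assert (Hcc : 0 < cc) by (unfold cc; apply Rdiv_lt_0_compat; lra).
    assert (Hxx : forall c, V (add x0 (scal c (add x (opp x))))).
    { intros c. rewrite (add_opp X x), X_scalz, X_add0r. exact Vx0. }
    destruct (NB X V x0 cc x x HV (Hxx cc)) as [O1 [HO1 [O1x HO1']]].
    destruct (NB X V x0 (- cc) x x HV (Hxx (- cc))) as [O2 [HO2 [O2x HO2']]].
    exists (fun y => O1 y /\ O2 y). split; [apply open_inter; auto|split; auto].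
    intros y [Y1 Y2]. pose proof (fbnd _ (HO1' y Y1)) as F1. pose proof (fbnd _ (HO2' y Y2)) as F2.
    rewrite fscal, fadd, fopp in F1, F2.
    assert (H1 : cc * (f y - f x) <= 1) by lra.
    assert (H2 : - 1 <= cc * (f y - f x)) by lra.
    assert (Hce : cc * eps = 2) by (unfold cc; field; lra).
    apply Rabs_lt_iff. split; nra. }
  set (fd := Build_dual X f fadd fscal fcont).
  set (a := phi ((zero, 1) : E)).
  assert (Hphi : forall x s, phi ((x, s) : E) = f x + a * s).
  { intros x s. unfold f, a. rewrite (Rmult_comm _ s), <- Pscal, <- Padd. f_equal. simpl.
    rewrite X_scalz, X_add0r. f_equal; ring. }
  destruct (Nabs z) as [t [Ht Nt]].
  exists fd, a, (phi ((x0, rho) : E) - t). split.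
  - intros x s Hxs.
    assert (HK : K (vadd (vadd ((x, s) : E) (vopp c1)) (vscal t z))).
    { exists (vscal (- t) z). split; auto. rewrite vid1. exact Hxs. }
    apply PK in HK. rewrite !Padd, Pscal, Pz, (vopp_scal E), Pscal in HK.
    unfold z in Pz. rewrite Padd, (vopp_scal E), Pscal in Pz.
    change (fd x) with (f x). rewrite <- Hphi. change (@pair (vT (VS_of X)) R x s) with (@pair (car X) R x s). lra.
  - change (fd x0) with (f x0). rewrite <- Hphi. change (@pair (vT (VS_of X)) R x0 rho) with (@pair (car X) R x0 rho). lra.
Qed.

Definition dual_zero (X : LCS) : dual X.
Proof.
  refine (Build_dual X (fun _ => 0) _ _ _).
  - intros; ring.
  - intros; ring.
  - intros x eps Heps. exists (fun _ => True). split; [apply open_full|split; auto].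
    intros y _. rewrite Rminus_diag, Rabs_R0. exact Heps.
Defined.

Definition dual_scale (X : LCS) (k : R) (f : dual X) : dual X.
Proof.
  refine (Build_dual X (fun x => k * f x) _ _ _).
  - intros. rewrite dfun_add. ring.
  - intros. rewrite dfun_scal. ring.
  - intros x eps Heps.
    assert (Hk : 0 < Rabs k + 1) by (pose proof (Rabs_pos k); lra).
    destruct (dfun_cont X f x (eps / (Rabs k + 1))) as [U [HU [Ux HUx]]].
    { apply Rdiv_lt_0_compat; lra. }
    exists U. split; auto. split; auto. intros y Hy.
    specialize (HUx y Hy).
    replace (k * f y - k * f x) with (k * (f y - f x)) by ring.
    rewrite Rabs_mult.
    assert (H1 : Rabs k * Rabs (f y - f x) <= Rabs k * (eps / (Rabs k + 1)))
      by (apply Rmult_le_compat_l; [apply Rabs_pos|lra]).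
    assert (H2 : Rabs k * (eps / (Rabs k + 1)) < eps).
    { apply Rmult_lt_reg_r with (Rabs k + 1); auto.
      replace (Rabs k * (eps / (Rabs k + 1)) * (Rabs k + 1)) with (Rabs k * eps) by (field; lra).
      nra. }
    lra.
Defined.

Lemma Rbar_le_antisym u v : Rbar_le u v -> Rbar_le v u -> u = v.
Proof. destruct u, v; simpl; intros; try tauto. f_equal. lra. Qed.

Lemma core (X : LCS) (g : X -> Rbar) (hclosed : closed_fun g) (hconvex : convex_fun g) x0 rho :
  ~ Rbar_le (g x0) (Fin rho) ->
  exists xi r, ~ Rbar_le (Rbar_idiff (xi_r xi r x0) (conj_fun g xi r)) (Fin rho).
Proof.
  intros Hx0.
  destruct (classic (exists x1 s1, Rbar_le (g x1) (Fin s1))) as [[x1 [s1 Hx1]]|Hn].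
  2:{ exists (Plain (dual_zero X)), 0.
      assert (Hc : conj_fun g (Plain (dual_zero X)) 0 = MInf).
      { apply Rbar_le_MInf. apply Rbar_sup_least. intros v [x ->].
        destruct (g x) as [b| |] eqn:Hg; simpl; trivial.
        - exfalso. apply Hn. exists x, b. rewrite Hg. simpl. lra.
        - exfalso. apply Hn. exists x, 0. rewrite Hg. simpl. exact I. }
      rewrite Hc. simpl. tauto. }
  destruct (separation X g hclosed hconvex x0 rho x1 s1 Hx0 Hx1) as [f [a [c [Hsep Hpt]]]].
  destruct (Rtotal_order a 0) as [Hneg|[Hz|Hpos]].
  - set (k := / (- a)).
    assert (Hk : k * (- a) = 1) by (unfold k; field; lra).
    assert (Hk0 : 0 < k) by (unfold k; apply Rinv_0_lt_compat; lra).
    exists (Plain (dual_scale X k f)), (c * k).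
    assert (Hc : Rbar_le (conj_fun g (Plain (dual_scale X k f)) (c * k)) (Fin 0)).
    { apply Rbar_sup_least. intros v [x ->].
      destruct (g x) as [b| |] eqn:Hg; simpl; trivial.
      - assert (H := Hsep x b ltac:(rewrite Hg; simpl; lra)).
        assert (H2 : k * (f x - c) <= k * (- a * b)) by (apply Rmult_le_compat_l; lra).
        replace (k * (- a * b)) with b in H2 by (rewrite <- Rmult_assoc, Hk; ring).
        assert (E1 : k * (f x - c) = k * f x - c * k) by ring. lra.
      - exfalso. assert (H := Hsep x ((c - f x) / a - 1) ltac:(rewrite Hg; simpl; trivial)).
        replace (f x + a * ((c - f x) / a - 1)) with (c - a) in H by (field; lra). lra. }
    destruct (conj_fun g (Plain (dual_scale X k f)) (c * k)) as [b| |]; simpl in *; try tauto.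
    assert (H2 : k * (- a * rho) < k * (f x0 - c)) by (apply Rmult_lt_compat_l; lra).
    replace (k * (- a * rho)) with rho in H2 by (rewrite <- Rmult_assoc, Hk; ring).
    assert (E1 : k * (f x0 - c) = k * f x0 - c * k) by ring. lra.
  - subst a. exists (Hat f), c.
    assert (Hc : conj_fun g (Hat f) c = MInf).
    { apply Rbar_le_MInf. apply Rbar_sup_least. intros v [x ->].
      destruct (g x) as [b| |] eqn:Hg; simpl; trivial.
      - assert (H := Hsep x b ltac:(rewrite Hg; simpl; lra)).
        destruct (Rle_dec (f x - c) 0); simpl; trivial. lra.
      - assert (H := Hsep x 0 ltac:(rewrite Hg; simpl; trivial)).
        destruct (Rle_dec (f x - c) 0); simpl; trivial. lra. }
    rewrite Hc. simpl. destruct (Rle_dec (f x0 - c) 0); simpl; [lra|tauto].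
  - exfalso. set (s := Rmax s1 ((c - f x1) / a + 1)).
    assert (H := Hsep x1 s ltac:(apply (Rbar_le_trans _ _ _ Hx1); simpl; apply Rmax_l)).
    assert (H2 : (c - f x1) / a + 1 <= s) by apply Rmax_r.
    assert (H3 : a * ((c - f x1) / a + 1) <= a * s) by (apply Rmult_le_compat_l; lra).
    replace (a * ((c - f x1) / a + 1)) with (c - f x1 + a) in H3 by (field; lra).
    lra.
Qed.

Theorem mainTheorem12 (X : LCS) (g : X -> Rbar)
  (hclosed : closed_fun g) (hconvex : convex_fun g) :
  forall x : X, biconj_fun g x = g x.
Proof.
  intros x0. unfold biconj_fun.
  apply Rbar_le_antisym.
  - apply Rbar_sup_least. intros v [xi [r ->]]. apply idiff_swap.
    apply Rbar_sup_ub. exists x0. reflexivity.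
  - set (sp := Rbar_sup _).
    assert (Hub : forall v, (exists xi r, v = Rbar_idiff (xi_r xi r x0) (conj_fun g xi r)) -> Rbar_le v sp).
    { intros v Hv. apply Rbar_sup_ub. exact Hv. }
    apply NNPP. intros Hn.
    assert (Hr : exists rho, ~ Rbar_le (g x0) (Fin rho) /\ Rbar_le sp (Fin rho)).
    { destruct sp as [b| |] eqn:Hsp.
      - exists b. split; auto. simpl. lra.
      - exfalso. apply Hn. destruct (g x0); simpl; trivial.
      - destruct (g x0) as [a| |] eqn:Hg.
        + exists (a - 1). split; simpl; auto. lra.
        + exists 0. split; simpl; auto.
        + exfalso. apply Hn. simpl. trivial. }
    destruct Hr as [rho [H1 H2]].
    destruct (core X g hclosed hconvex x0 rho H1) as [xi [r H]].
    apply H. eapply Rbar_le_trans; [apply Hub; eauto|exact H2].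
Qed.
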